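(* Let $\gamma_2>\gamma_1>0$ and let $k_a\ge 1$ be an integer. Consider two agents, Alice (A) and Bob (B), whose states satisfy for $k=0,\dots,k_a-1$ $$p_X^{(k+1)}=p_X^{(k)}+v_X^{(k)},\qquad X\in\{A,B\},$$ and let $a_{AB}^{(k)}\neq 0$ ($k=0,\dots,k_a-1$) be known weights and $$u_{AB}^{(k)}=\gamma_1a_{AB}^{(k)}\big(p_B^{(k)}-p_A^{(k)}\big)+\gamma_2a_{AB}^{(k)}\big(v_B^{(k)}-v_A^{(k)}\big),\qquad k=0,\dots,k_a-1.$$ Suppose $|p_B^{(k_a)}-p_A^{(k_a)}|\le\delta$ for some $\delta\ge 0$. Set $r=\frac{\gamma_2}{\gamma_2-\gamma_1}$, $$\varphi_k=\frac{1}{\gamma_1-\gamma_2}\Big(\gamma_1p_A^{(k)}+\gamma_2v_A^{(k)}+\frac{u_{AB}^{(k)}}{a_{AB}^{(k)}}\Big),$$ and define the estimates (computable from $p_A^{(k)},v_A^{(k)},u_{AB}^{(k)},a_{AB}^{(k)}$ only) $$\hat p_B^{(0)}=r^{k_a}p_A^{(k_a)}+\sum_{k=0}^{k_a-1}r^{k}\varphi_k,\qquad \hat v_B^{(0)}=-\frac{\gamma_1}{\gamma_2}\hat p_B^{(0)}-\frac{\gamma_2-\gamma_1}{\gamma_2}\varphi_0 .$$ Then the errors $\varepsilon_p=\hat p_B^{(0)}-p_B^{(0)}$ and $\varepsilon_v=\hat v_B^{(0)}-v_B^{(0)}$ satisfy $$|\varepsilon_p|\le\Big(\frac{\gamma_2}{\gamma_2-\gamma_1}\Big)^{k_a}\delta,\qquad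 |\varepsilon_v|\le\frac{\gamma_1\gamma_2^{k_a-1}}{(\gamma_2-\gamma_1)^{k_a}}\delta.$$
   Context: This models a curious agent Alice estimating the initial position and velocity of a neighbor Bob in a network of double-integrator agents $p^{(k+1)}=p^{(k)}+v^{(k)}$, $v^{(k+1)}=v^{(k)}+u^{(k)}$ under the consensus law $u_i^{(k)}=\sum_j\gamma_1a_{ij}^{(k)}(p_j^{(k)}-p_i^{(k)})+\gamma_2a_{ij}^{(k)}(v_j^{(k)}-v_i^{(k)})$; $u_{AB}^{(k)}$ is Bob's contribution to Alice's input, and the coupling weights $a_{AB}^{(k)}$ are public. The condition $|p_B^{(k_a)}-p_A^{(k_a)}|\le\delta$ is called local $\delta$-agreement at time $k_a$. *)

(* Defs.v *)
From Stdlib Require Import Reals.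
Open Scope R_scope.

Fixpoint sum_lt (n : nat) (f : nat -> R) : R :=
  match n with
  | O => 0
  | S m => sum_lt m f + f m
  end.

Definition uAB (g1 g2 : R) (a pA pB vA vB : nat -> R) (k : nat) : R :=
  g1 * a k * (pB k - pA k) + g2 * a k * (vB k - vA k).

Definition phi (g1 g2 : R) (a pA vA u : nat -> R) (k : nat) : R :=
  / (g1 - g2) * (g1 * pA k + g2 * vA k + u k / a k).

Definition hat_pB0 (g1 g2 : R) (ka : nat) (a pA vA u : nat -> R) : R :=
  let r := g2 / (g2 - g1) in
  r ^ ka * pA ka + sum_lt ka (fun k => r ^ k * phi g1 g2 a pA vA u k).

Definition hat_vB0 (g1 g2 : R) (ka : nat) (a pA vA u : nat -> R) : R :=
  - (g1 / g2) * hat_pB0 g1 g2 ka a pA vA u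
  - (g2 - g1) / g2 * phi g1 g2 a pA vA u 0%nat.

(* Main.v *)
Require Import Defs.
From Stdlib Require Import Reals Lra Lia.
Open Scope R_scope.

Theorem theorem2 (g1 g2 delta : R) (ka : nat)
  (pA pB vA vB a : nat -> R)
  (Hg1 : 0 < g1) (Hg12 : g1 < g2) (Hka : (1 <= ka)%nat)
  (HpA : forall k, (k < ka)%nat -> pA (S k) = pA k + vA k)
  (HpB : forall k, (k < ka)%nat -> pB (S k) = pB k + vB k)
  (Ha : forall k, (k < ka)%nat -> a k <> 0)
  (Hdelta : 0 <= delta)
  (Hagree : Rabs (pB ka - pA ka) <= delta) :
  let u := uAB g1 g2 a pA pB vA vB in
  Rabs (hat_pB0 g1 g2 ka a pA vA u - pB 0%nat)
    <= (g2 / (g2 - g1)) ^ ka * delta /\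
  Rabs (hat_vB0 g1 g2 ka a pA vA u - vB 0%nat)
    <= g1 * g2 ^ (ka - 1) / (g2 - g1) ^ ka * delta.
Proof.
  intros u.
  set (r := g2 / (g2 - g1)).
  assert (Hd : g2 - g1 <> 0) by lra.
  assert (Hphi : forall k, (k < ka)%nat ->
    phi g1 g2 a pA vA u k = pB k - r * pB (S k)).
  { intros k Hk. unfold phi, u, uAB, r. rewrite (HpB k Hk).
    specialize (Ha k Hk). field; repeat split; auto; lra. }
  assert (Htel : forall n, (n <= ka)%nat ->
    sum_lt n (fun k => r ^ k * phi g1 g2 a pA vA u k) = pB 0%nat - r ^ n * pB n).
  { induction n as [|n IH]; intros Hn; simpl.
    - ring.
    - rewrite IH by lia. rewrite (Hphi n) by lia. ring. }
  assert (Hep : hat_pB0 g1 g2 ka a pA vA u - pB 0%nat = r ^ ka * (pA ka - pB ka)).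
  { unfold hat_pB0. fold r. rewrite Htel by lia. ring. }
  assert (Hr : 0 <= r ^ ka).
  { apply pow_le. unfold r. apply Rlt_le, Rdiv_lt_0_compat; lra. }
  assert (Hbp : Rabs (hat_pB0 g1 g2 ka a pA vA u - pB 0%nat) <= r ^ ka * delta).
  { rewrite Hep, Rabs_mult, (Rabs_right (r ^ ka)) by lra.
    apply Rmult_le_compat_l; auto. rewrite Rabs_minus_sym; auto. }
  split; [exact Hbp|].
  assert (Hev : hat_vB0 g1 g2 ka a pA vA u - vB 0%nat =
     - (g1 / g2) * (hat_pB0 g1 g2 ka a pA vA u - pB 0%nat)).
  { unfold hat_vB0. rewrite (Hphi 0%nat) by lia.
    pose proof (HpB 0%nat ltac:(lia)) as H0. rewrite H0. unfold r. field. lra. }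
  rewrite Hev, Rabs_mult.
  assert (Habs : Rabs (- (g1 / g2)) = g1 / g2).
  { rewrite Rabs_Ropp. apply Rabs_right. apply Rle_ge, Rlt_le, Rdiv_lt_0_compat; lra. }
  rewrite Habs.
  replace (g1 * g2 ^ (ka - 1) / (g2 - g1) ^ ka * delta) with (g1 / g2 * (r ^ ka * delta)).
  - apply Rmult_le_compat_l; auto. apply Rlt_le, Rdiv_lt_0_compat; lra.
  - destruct ka as [|m]; [lia|]. replace (S m - 1)%nat with m by lia.
    unfold r. unfold Rdiv. rewrite Rpow_mult_distr, pow_inv. simpl. field.
    split; [apply pow_nonzero; lra | lra].
Qed.
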